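(* For all $n\ge0$, $$F_{2n}(x,y,q)=\sum_{k=0}^nx^{n-k}y^kq^{\binom{n+k}2-nk}\begin{bmatrix}n\\k\end{bmatrix}_qF_{n-k}(xq^{n+k},yq^{n+k},q).$$
   Context: $\Pi_n(13/2,123)$ is the set of layered matchings of $[n]$: set partitions whose blocks are consecutive intervals $[1,i_1]/\dots/[i_{k-1}+1,n]$, each of size $1$ or $2$. $\Pi_0(13/2,123)$ consists of the empty partition. For $\pi=B_1/\dots/B_k$ with $\min B_1<\dots<\min B_k$, $rb(\pi)$ is the number of pairs $(b,B_j)$ with $b\in B_i$, $j>i$, $\max B_j>b$. Let $s(\pi)$ and $d(\pi)$ be the numbers of blocks of size $1$ and $2$. Define $F_n(x,y,q)=\sum_{\pi\in\Pi_n(13/2,123)}x^{s(\pi)}y^{d(\pi)}q^{rb(\pi)}$. $F_n(xq^a,yq^a,q)$ denotes the substitution $x\mapsto xq^a$, $y\mapsto yq^a$. The $q$-binomial coefficient is $\begin{bmatrix}n\\k\end{bmatrix}_q=\prod_{i=1}^k\frac{q^{n-i+1}-1}{q^i-1}$ for $0\le k\le n$. *)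

(* Defs.v *)
From HB Require Import structures.
From mathcomp Require Import all_boot all_order all_algebra.
Set Implicit Arguments. Unset Strict Implicit. Unset Printing Implicit Defensive.
Import Order.TTheory GRing.Theory Num.Theory.

(* A set partition of [n] is represented as the list of its blocks B_1,...,B_k
   ordered by increasing minima, each block a list of its elements. *)

Fixpoint interval_blocks (start : nat) (c : seq nat) : seq (seq nat) :=
  match c with
  | [::] => [::]
  | a :: c' => iota start a :: interval_blocks (start + a) c'
  end.

(* Layered matching of [n] = {1..n} encoded by a tuple of booleans:
   [true] = block of size 2, [false] = block of size 1. *)
Definition part_size (b : bool) : nat := if b then 2 else 1.

Definition layered_blocks (t : seq bool) : seq (seq nat) :=
  interval_blocks 1 (map part_size t).

Fixpoint rb (bs : seq (seq nat)) : nat :=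
  match bs with
  | [::] => 0
  | B :: bs' =>
      (\sum_(b <- B) count (fun Bj => b < \max_(x <- Bj) x) bs') + rb bs'
  end.

Definition nsingle (bs : seq (seq nat)) : nat := count (fun B => size B == 1) bs.
Definition ndouble (bs : seq (seq nat)) : nat := count (fun B => size B == 2) bs.

Local Open Scope ring_scope.

(* F_n(x,y,q) = sum over layered matchings pi of [n] of x^s y^d q^rb.
   Layered matchings with k blocks correspond to k-tuples of part sizes in {1,2}
   summing to n. *)
Definition F {R : comPzRingType} (n : nat) (x y q : R) : R :=
  \sum_(k < n.+1) \sum_(t : k.-tuple bool | sumn (map part_size t) == n)
     x ^+ nsingle (layered_blocks t) * y ^+ ndouble (layered_blocks t)
       * q ^+ rb (layered_blocks t).

Definition qbinom {R : fieldType} (n k : nat) (q : R) : R :=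
  \prod_(1 <= i < k.+1) ((q ^+ (n - i + 1) - 1) / (q ^+ i - 1)).

(* Main.v *)
Set Warnings "-notation-overridden,-ambiguous-paths".
Require Import Defs.
From HB Require Import structures.
From mathcomp Require Import all_boot all_order all_algebra.
Import Order.TTheory GRing.Theory Num.Theory.
From Stdlib Require Import Lia.
Local Open Scope ring_scope.

Fixpoint rbc (c : seq nat) : nat :=
  if c is a :: c' then (a * size c' + rbc c')%N else 0%N.

Lemma count_ib (s b : nat) c : (b < s)%N -> all (fun a => 0 < a)%N c ->
  count (fun Bj => b < \max_(x <- Bj) x)%N (interval_blocks s c) = size c.
Proof.
elim: c s => [|a c IH] s //= hb /andP[ha hc].
rewrite (IH (s + a)%N) ?(leq_trans hb) ?leq_addr //.
have := @leq_bigmax_seq nat (iota s a) xpredT id s; apply => //; by rewrite mem_iota leqnn /= -{1}(addn0 s) ltn_add2l.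
Qed.

Lemma rb_ib s c : all (fun a => 0 < a)%N c ->
  rb (interval_blocks s c) = rbc c.
Proof.
elim: c s => [|a c IH] s //= /andP[ha hc].
rewrite IH //; congr (_ + _)%N.
rewrite (eq_big_seq (fun _ => size c)).
  by rewrite big_const_seq count_predT size_iota iter_addn_0 mulnC.
move=> b; rewrite mem_iota => /andP[_ hb]; exact: count_ib.
Qed.

Lemma ns_ib s c : nsingle (interval_blocks s c) = count (fun a => a == 1)%N c.
Proof. by elim: c s => [|a c IH] s //=; rewrite IH size_iota. Qed.

Lemma nd_ib s c : ndouble (interval_blocks s c) = count (fun a => a == 2)%N c.
Proof. by elim: c s => [|a c IH] s //=; rewrite IH size_iota. Qed.

Definition ps := part_size.
Definition wt {R : comPzRingType} (q x y : R) (t : seq bool) : R :=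
  x ^+ nsingle (layered_blocks t) * y ^+ ndouble (layered_blocks t)
    * q ^+ rb (layered_blocks t).

Lemma all_ps t : all (fun a => 0 < a)%N (map part_size t).
Proof. by elim: t => [|[] t IH]. Qed.

Lemma wtE (R : comPzRingType) (q x y : R) t : wt q x y t =
  x ^+ count (fun a => a == 1)%N (map part_size t)
  * y ^+ count (fun a => a == 2)%N (map part_size t) * q ^+ rbc (map part_size t).
Proof. by rewrite /wt /layered_blocks ns_ib nd_ib rb_ib ?all_ps. Qed.

Lemma count12 t : (count (fun a => a == 1)%N (map part_size t)
  + count (fun a => a == 2)%N (map part_size t))%N = size t.
Proof. by elim: t => [|[] t IH] //=; rewrite ?add0n ?addn0 ?addSn ?addnS IH. Qed.

Lemma wt_cons (R : comPzRingType) (q x y : R) b t :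
  wt q x y (b :: t) = (if b then y else x)
     * wt q (x * q ^+ part_size b) (y * q ^+ part_size b) t.
Proof.
rewrite !wtE /= size_map -(count12 t).
set n1 := count _ _; set n2 := count _ _; set r := rbc _.
rewrite !exprMn -!exprM mulnDr !exprD.
set A := x ^+ n1; set B := y ^+ n2; set E := q ^+ r.
case: b => /=.
  set C := q ^+ _; set D := q ^+ (2 * n2).
  by rewrite expr0 expr1 mul1r !mulrA [A * y]mulrC (mulrAC (y * A) B C).
set C := q ^+ _; set D := q ^+ (1 * n2).
by rewrite expr0 expr1 mul1r !mulrA (mulrAC (x * A) B C).
Qed.

Lemma sum_tupleS (R : comPzRingType) k (f : seq bool -> R) (P : seq bool -> bool) :
  \sum_(t : k.+1.-tuple bool | P t) f t =
  \sum_(b : bool) \sum_(t : k.-tuple bool | P (b :: t)) f (b :: t).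
Proof.
rewrite pair_big_dep.
rewrite (reindex (fun p : bool * k.-tuple bool => [tuple of p.1 :: p.2])) //=.
exists (fun t : k.+1.-tuple bool => (thead t, [tuple of behead t])).
  by case=> b t _ /=; rewrite theadE; congr pair; apply: val_inj.
by move=> t _; rewrite [in RHS](tuple_eta t).
Qed.

Lemma sumn_ps t : (size t <= sumn (map part_size t))%N.
Proof. by elim: t => [|[] t IH] //=; rewrite ?add1n ?ltnS // ltnW. Qed.

Lemma FE (R : comPzRingType) (n : nat) (x y q : R) :
  F n x y q = \sum_(k < n.+1) \sum_(t : k.-tuple bool | sumn (map part_size t) == n) wt q x y t.
Proof. by []. Qed.

Lemma F_rec (R : comPzRingType) (N : nat) (x y q : R) :
  F N.+2 x y q = x * F N.+1 (x * q) (y * q) q + y * F N (x * q ^+ 2) (y * q ^+ 2) q.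
Proof.
rewrite !FE big_ord_recl big_pred0 ?add0r; last by move=> t; rewrite tuple0.
under eq_bigr => k _ do rewrite (@sum_tupleS R k (fun t => wt q x y t) (fun t => sumn (map part_size t) == N.+2)%N) big_bool /=.
rewrite big_split /= addrC; congr (_ + _).
  rewrite mulr_sumr; apply: eq_bigr => k _; rewrite mulr_sumr.
  apply: eq_bigr => t _; by rewrite wt_cons expr1.
rewrite big_ord_recr /= [X in _ + X = _]big_pred0 ?addr0; last first.
  move=> t; apply/negbTE; rewrite eqn_add2l neq_ltn.
  by apply/orP; right; have := sumn_ps t; rewrite size_tuple.
rewrite mulr_sumr; apply: eq_bigr => k _; rewrite mulr_sumr.
apply: eq_big => t; first by rewrite eqn_add2l.
by move=> _; rewrite wt_cons.
Qed.

Fixpoint gb {R : comPzRingType} (q : R) (n k : nat) : R :=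
  match n, k with
  | _, 0 => 1
  | 0, _.+1 => 0
  | n'.+1, k'.+1 => gb q n' k + q ^+ (n' - k') * gb q n' k'
  end.

Lemma gb_gt (R : comPzRingType) (q : R) n k : (n < k)%N -> gb q n k = 0.
Proof.
elim: n k => [|n IH] [|k] //= h.
by rewrite !IH ?mulr0 ?addr0 // ltnW.
Qed.

Lemma L1 (R : comPzRingType) (x y q g f : R) a b c :
  x * ((x * q) ^+ a * (y * q) ^+ b * q ^+ c * g * f) =
  x ^+ a.+1 * y ^+ b * q ^+ (a + b + c) * g * f.
Proof.
rewrite !exprMn !exprD exprS !mulrA.
set X := x ^+ a; set Y := y ^+ b; set A := q ^+ a; set B := q ^+ b; set C := q ^+ c.
by rewrite (mulrAC (x * X) A Y) (mulrAC (x * X * Y) A B).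
Qed.

Lemma L2 (R : comPzRingType) (x y q g f : R) a b c :
  y * ((x * q ^+ 2) ^+ a * (y * q ^+ 2) ^+ b * q ^+ c * g * f) =
  x ^+ a * y ^+ b.+1 * q ^+ (2 * a + 2 * b + c) * g * f.
Proof.
rewrite !exprMn !mul2n -!addnn !exprD exprS !mulrA.
set X := x ^+ a; set Y := y ^+ b; set A := q ^+ a; set B := q ^+ b.
by rewrite [y * X]mulrC (mulrAC (X * y * A) A Y) (mulrAC (X * y) A Y).
Qed.

Lemma binS2 n : 'C(n.+1, 2) = ('C(n, 2) + n)%N.
Proof. by rewrite binS bin1. Qed.

Lemma T1 (R : comPzRingType) (q x y g : R) n k M : (k <= n)%N ->
  x * ((x * q) ^+ (n - k) * (y * q) ^+ k * q ^+ ('C(n, 2) + 'C(k, 2)) * g *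
   F M (x * q * q ^+ (n + k)) (y * q * q ^+ (n + k)) q) =
  x ^+ (n.+1 - k) * y ^+ k * q ^+ ('C(n.+1, 2) + 'C(k, 2)) * g *
   F M (x * q ^+ (n.+1 + k)) (y * q ^+ (n.+1 + k)) q.
Proof.
move=> hk; rewrite L1 subSn // -[x * q * _]mulrA -[y * q * _]mulrA -!exprS addSn.
rewrite binS2; congr (_ * _ * (q ^+ _) * _ * _).
move/ssrnat.leP: hk => hk; rewrite -!plusE -!minusE; lia.
Qed.

Lemma T2 (R : comPzRingType) (q x y g : R) n i M : (i <= n)%N ->
  y * ((x * q ^+ 2) ^+ (n - i) * (y * q ^+ 2) ^+ i * q ^+ ('C(n, 2) + 'C(i, 2)) * g *
   F (M - i) (x * q ^+ 2 * q ^+ (n + i)) (y * q ^+ 2 * q ^+ (n + i)) q) =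
  x ^+ (n.+1 - i.+1) * y ^+ i.+1 * q ^+ ('C(n.+1, 2) + 'C(i.+1, 2)) * (q ^+ (n - i) * g) *
   F (M.+1 - i.+1) (x * q ^+ (n.+1 + i.+1)) (y * q ^+ (n.+1 + i.+1)) q.
Proof.
move=> hi; rewrite L2 !subSS -[x * q ^+ 2 * _]mulrA -[y * q ^+ 2 * _]mulrA -!exprD.
rewrite [_ * (q ^+ (n - i) * g)]mulrA -[_ * _ * q ^+ (n - i)]mulrA -exprD !binS2.
have -> : (n.+1 + i.+1 = 2 + (n + i))%N by rewrite addSn addnS.
congr (_ * _ * (q ^+ _) * _ * _).
move/ssrnat.leP: hi => hi; rewrite -!plusE -!minusE -!multE; lia.
Qed.

Lemma gbS (R : comPzRingType) (q : R) n k :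
  gb q n.+1 k.+1 = gb q n k.+1 + q ^+ (n - k) * gb q n k.
Proof. by []. Qed.

Lemma mainG (R : comPzRingType) (q : R) n : forall m, (n <= m)%N -> forall x y,
  F (n + m) x y q = \sum_(k < n.+1) x ^+ (n - k) * y ^+ k * q ^+ ('C(n, 2) + 'C(k, 2))
     * gb q n k * F (m - k) (x * q ^+ (n + k)) (y * q ^+ (n + k)) q.
Proof.
elim: n => [|n IH] m hm x y.
  by rewrite big_ord1 /= !expr0 !mulr1 !mul1r subn0.
case: m hm => [|m] // hm.
rewrite addSn addnS F_rec -addnS (IH m.+1) ?(ltnW hm) // (IH m) //.
rewrite (big_ord_recl n.+1) [x * _]mulr_sumr [in LHS](big_ord_recl n).
under [in RHS]eq_bigr => i _ do rewrite lift0 gbS mulrDr mulrDl.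
rewrite big_split /= [X in _ = _ + (X + _)](big_ord_recr n) /= (@gb_gt R q n n.+1) // mulr0 mul0r addr0.
rewrite [X in _ + _ + X = _]mulr_sumr addrA.
congr (_ + _ + _).
- rewrite (@T1 _ _ _ _ _ n 0 _ (leq0n n)); congr (_ * _ * _).
  by case: (n).
- by apply: eq_bigr => j _; rewrite T1.
- by apply: eq_bigr => j _; rewrite T2 // -ltnS.
Qed.

Definition Pk {R : comPzRingType} (q : R) k := \prod_(1 <= i < k.+1) (q ^+ i - 1).
Definition Qk {R : comPzRingType} (q : R) n k := \prod_(1 <= i < k.+1) (q ^+ (n - i + 1) - 1).

Lemma gbPQ (R : comPzRingType) (q : R) n k : (k <= n)%N -> gb q n k * Pk q k = Qk q n k.
Proof.
elim: n k => [|n IH] [|k] hk.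
- by rewrite /Pk /Qk !big_geq // mul1r.
- by [].
- by rewrite /Pk /Qk !big_geq // mul1r.
have PS : Pk q k.+1 = Pk q k * (q ^+ k.+1 - 1) by rewrite /Pk big_nat_recr.
have QS : Qk q n.+1 k.+1 = (q ^+ n.+1 - 1) * Qk q n k.
  rewrite /Qk big_nat_recl // subn1 addn1 /=; congr (_ * _).
rewrite gbS QS mulrDl.
have [h|h|h] := ltngtP k n.
- have QS2 : Qk q n k.+1 = Qk q n k * (q ^+ (n - k) - 1).
    rewrite /Qk big_nat_recr //.
    have -> : (n - k.+1 + 1 = n - k)%N by rewrite subnS addn1 prednK ?subn_gt0.
    by [].
  have IHk := IH k (ltnW h).
  rewrite IH // PS QS2.
  move: IHk; set G := gb q n k; set P := Pk q k; set Qn := Qk q n k => IHk.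
  clearbody G P Qn.
  rewrite mulrA -(mulrA (q ^+ (n - k)) G P) IHk.
  have E : (q ^+ (n - k) - 1) + q ^+ (n - k) * (q ^+ k.+1 - 1) = q ^+ n.+1 - 1.
    rewrite mulrBr (mulr1 (q ^+ (n - k))) -exprD addnS (subnK (ltnW h)).
    by rewrite (addrC (q ^+ (n - k) - 1)) addrA (subrK (q ^+ (n - k))).
  by rewrite -E [RHS]mulrC [in RHS](mulrDr Qn) [in RHS](mulrA Qn) (mulrC Qn (q ^+ (n - k))).
- by rewrite ltnS in hk; move: (leq_ltn_trans hk h); rewrite ltnn.
- subst k.
  rewrite (@gb_gt _ q n n.+1 (ltnSn n)) (mul0r (Pk q n.+1)) add0r subnn expr0 mul1r PS.
  by rewrite (mulrA (gb q n n)) (IH n (leqnn n)) mulrC.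
Qed.


Lemma qbinom_gb (R : fieldType) (q : R) n k :
  (forall i : nat, (0 < i <= n)%N -> q ^+ i != 1) -> (k <= n)%N ->
  qbinom n k q = gb q n k.
Proof.
move=> hq hk.
have P0 : Pk q k != 0.
  rewrite /Pk prodf_seq_neq0; apply/allP => i; rewrite mem_index_iota => /andP[h1 h2] /=.
  by rewrite subr_eq0 hq // h1 (leq_trans _ hk) // -ltnS.
rewrite /qbinom prodf_div -/(Qk q n k) -/(Pk q k) -(gbPQ _ q _ _ hk) mulfK //.
Qed.

Lemma binD2 n k : 'C(n + k, 2) = ('C(n, 2) + 'C(k, 2) + n * k)%N.
Proof.
elim: k => [|k IH]; first by rewrite addn0 muln0 bin0n !addn0.
rewrite addnS !binS2 IH mulnS.
rewrite -!plusE -!multE; lia.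
Qed.

Theorem theorem4p7 (R : fieldType) (n : nat) (x y q : R)
  (hq : forall i : nat, (0 < i <= n)%N -> q ^+ i != 1) :
  F (2 * n) x y q =
  \sum_(k < n.+1)
     x ^+ (n - k) * y ^+ k * q ^+ ('C(n + k, 2) - n * k)
       * qbinom n k q * F (n - k) (x * q ^+ (n + k)) (y * q ^+ (n + k)) q.
Proof.
rewrite mul2n -addnn (mainG _ q _ _ (leqnn n)).
apply: eq_bigr => k _.
have hk : (k <= n)%N by rewrite -ltnS ltn_ord.
by rewrite (qbinom_gb _ _ _ _ hq hk) binD2 addnK.
Qed.
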